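(* Let $f(t)=1+\sum_{i=1}^{d}\binom{x_i}{i}t^{i}$ be a polynomial with positive integer coefficients, where $x_i\ge i-1$ are real numbers, and suppose all roots of $f(t)$ are real. If $x_{i-1}\ge\lceil x_i\rceil$ for all $2\le i\le d$, then $f(t)$ is the $f$-polynomial of a simplicial complex.
   Context: For real $x$ and integer $k\ge0$, $\binom{x}{k}=\frac{x(x-1)\cdots(x-k+1)}{k!}$; for $k\ge1$ and real $y>0$ there is a unique real $x\ge k-1$ with $\binom{x}{k}=y$. A simplicial complex $\Delta$ on a finite ground set is a family of subsets closed under taking subsets; $f_i$ is the number of faces of cardinality $i+1$ ($f_{-1}=1$ counts the empty face), and the $f$-polynomial of a $(d-1)$-dimensional $\Delta$ is $\sum_{i=0}^{d}f_{i-1}t^{i}$. A polynomial is called an $f$-polynomial of a simplicial complex if it equals the $f$-polynomial of some simplicial complex. *)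

(* Defs.v *)
From HB Require Import structures.
From mathcomp Require Import all_boot all_order all_algebra.
From mathcomp Require Import reals complex.
Set Implicit Arguments. Unset Strict Implicit. Unset Printing Implicit Defensive.
Import Order.TTheory GRing.Theory Num.Theory.
Local Open Scope ring_scope.

Definition binr (R : fieldType) (x : R) (k : nat) : R :=
  (\prod_(j < k) (x - j%:R)) / (k`!)%:R.

(* A simplicial complex on the finite ground set T: a family of subsets of T
   closed under taking subsets (we require it to be nonempty, i.e. it contains
   the empty face, as f_{-1} = 1). *)
Definition simplicial_complex (T : finType) (D : {set {set T}}) : Prop :=
  set0 \in D /\ forall A B : {set T}, A \in D -> B \subset A -> B \in D.

(* Number of faces of cardinality i (i.e. f_{i-1}). *)
Definition nfaces (T : finType) (D : {set {set T}}) (i : nat) : nat :=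
  #|[set A in D | #|A| == i]|.

(* f-polynomial  sum_i f_{i-1} t^i  (faces have cardinality at most #|T|). *)
Definition fpoly (R : nzRingType) (T : finType) (D : {set {set T}}) : {poly R} :=
  \poly_(i < #|T|.+1) (nfaces D i)%:R.

Definition is_fpoly (R : nzRingType) (p : {poly R}) : Prop :=
  exists (T : finType) (D : {set {set T}}), simplicial_complex D /\ fpoly R D = p.

Definition real_rooted (R : rcfType) (p : {poly R}) : Prop :=
  forall z : R[i], root (map_poly (real_complex R) p) z -> complex.Im z = 0.

(* Main.v *)
Require Import Defs.
From HB Require Import structures.
From mathcomp Require Import all_boot all_order all_algebra.
From mathcomp Require Import reals complex.
From mathcomp Require Import zify.
Import Order.TTheory GRing.Theory Num.Theory.
Local Open Scope ring_scope.

Lemma binr_nat (R : numFieldType) (k i : nat) : binr (k%:R : R) i = ('C(k, i))%:R.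
Proof.
rewrite /binr.
have -> : \prod_(j < i) (k%:R - j%:R : R) = (k ^_ i)%:R.
  elim: i k => [|i IH] k; first by rewrite big_ord0 ffactn0.
  rewrite big_ord_recl ffactnS subr0 natrM.
  case: k => [|k]; first by rewrite !mul0r.
  rewrite -IH; congr (_ * _); apply: eq_bigr => j _.
  by rewrite /= !mulrSr opprD addrACA subrr addr0.
by rewrite -bin_ffact natrM mulfK // pnatr_eq0 -lt0n fact_gt0.
Qed.

Lemma binr_mono (R : realFieldType) (k : nat) (y z : R) :
  (k.-1)%:R <= y -> y <= z -> binr y k <= binr z k.
Proof.
move=> hy hyz; rewrite /binr; apply: ler_wpM2r; first by rewrite invr_ge0 ler0n.
apply: ler_prod => j _; rewrite subr_ge0 lerD2r hyz andbT.
apply: le_trans hy; rewrite ler_nat; have := ltn_ord j; lia.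
Qed.

Lemma ext_set (X : finType) (n : nat) (S U : {set X}) :
  S \subset U -> (#|S| + n <= #|U|)%N ->
  exists F : {set X}, [/\ S \subset F, F \subset U & #|F| = (#|S| + n)%N].
Proof.
elim: n S => [|n IH] S hSU hc; first by exists S; rewrite addn0.
have hp : S \proper U by rewrite properEcard hSU; lia.
have [_ [y yU yS]] := properP hp.
have hs : #|y |: S| = (#|S|).+1 by rewrite cardsU1 yS.
have hc' : (#|y |: S| + n <= #|U|)%N by rewrite hs; lia.
have hsub : y |: S \subset U by rewrite subUset sub1set yU hSU.
have [F [h1 h2 h3]] := IH (y |: S) hsub hc'.
exists F; split => //; first by apply: subset_trans h1; apply: subsetUr.
by rewrite h3 hs addSnnS.
Qed.

Lemma card_B (M k : nat) : (k <= M)%N -> #|[set a : 'I_M | (val a < k)%N]| = k.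
Proof.
move=> hk.
have -> : [set a : 'I_M | (val a < k)%N] = widen_ord hk @: [set: 'I_k].
  apply/setP => a; rewrite inE; apply/idP/imsetP => [ha|[i _ ->]] //=.
  exists (Ordinal ha); rewrite ?inE //. by apply/val_inj.
by rewrite card_imset ?cardsT ?card_ord //; by move=> i j /(congr1 val) /= h; apply: val_inj.
Qed.

Theorem theorem3p3 (R : realType) (d : nat) (x : nat -> R)
  (hx : forall i : nat, (1 <= i <= d)%N -> (i.-1)%:R <= x i)
  (hcoef : forall i : nat, (1 <= i <= d)%N ->
     exists n : nat, (0 < n)%N /\ binr (x i) i = n%:R)
  (hreal : real_rooted (1 + \sum_(1 <= i < d.+1) binr (x i) i *: 'X^i))
  (hceil : forall i : nat, (2 <= i <= d)%N -> (Num.ceil (x i))%:~R <= x i.-1) :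
  is_fpoly (1 + \sum_(1 <= i < d.+1) binr (x i) i *: 'X^i : {poly R}).
Proof.
pose m j := `|Num.ceil (x j)|%N.
have hm : forall i, (1 <= i <= d)%N ->
    x i <= (m i)%:R /\ (m i)%:R = (Num.ceil (x i))%:~R :> R.
  move=> i hi.
  have hc : (0 <= Num.ceil (x i))%R.
    rewrite ceil_ge0; apply: (lt_le_trans _ (hx i hi)).
    by apply: (lt_le_trans (ltrN10 R)); rewrite ler0n.
  have e : (m i)%:R = (Num.ceil (x i))%:~R :> R by rewrite /m natr_absz ger0_norm.
  by split => //; rewrite e; apply: ceil_ge.
have hmono : forall i, (2 <= i <= d)%N -> (m i <= m i.-1)%N.
  move=> i hi; rewrite -(ler_nat R).
  have hi1 : (1 <= i.-1 <= d)%N by lia.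
  apply: le_trans (proj1 (hm _ hi1)).
  have hi2 : (1 <= i <= d)%N by lia.
  by rewrite (proj2 (hm _ hi2)); apply: hceil.
have hanti : forall k a, (1 <= a)%N -> (a + k <= d)%N -> (m (a + k) <= m a)%N.
  elim=> [|k IH] a ha hak; first by rewrite addn0.
  have h1 : (a + k <= d)%N by lia.
  apply: leq_trans (IH a ha h1).
  have h2 : (2 <= a + k.+1 <= d)%N by lia.
  by have := hmono _ h2; rewrite addnS.
have hbinhi : forall i, (1 <= i <= d)%N -> binr (x i) i <= ('C(m i, i))%:R.
  move=> i hi; rewrite -binr_nat; apply: binr_mono; first exact: hx.
  exact: (proj1 (hm _ hi)).
have hbinlo : forall i, (2 <= i <= d)%N -> ('C(m i, i.-1))%:R <= binr (x i.-1) i.-1.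
  move=> i hi; rewrite -binr_nat; apply: binr_mono.
    have hi2 : (1 <= i <= d)%N by lia.
    apply: le_trans (proj1 (hm _ hi2)); apply: le_trans (hx _ hi2).
    by rewrite ler_nat; lia.
  have hi2 : (1 <= i <= d)%N by lia.
  by rewrite (proj2 (hm _ hi2)); apply: hceil.
pose M := (\max_(i < d.+1) m i)%N.
have hmM : forall i, (i <= d)%N -> (m i <= M)%N.
  move=> i hi; have hi' : (i < d.+1)%N by [].
  exact: (leq_bigmax (F := fun i : 'I_d.+1 => m i) (Ordinal hi')).
pose B k : {set 'I_M} := [set a : 'I_M | (val a < k)%N].
have hBsub : forall k k', (k <= k')%N -> B k \subset B k'.
  move=> k k' hk; apply/subsetP => a; rewrite !inE => h; exact: leq_trans h hk.
pose mm j := if (j <= d)%N then m j else 0%N.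
pose U j := [set A : {set 'I_M} | A \subset B (m j) & #|A| == j].
pose S j := [set A : {set 'I_M} | A \subset B (mm j.+1) & #|A| == j].
pose P j (G : {set {set 'I_M}}) :=
  [&& S j \subset G, G \subset U j & #|G|%:R == binr (x j) j].
pose F j := odflt set0 [pick G | P j G].
have hPF : forall j, (1 <= j <= d)%N -> P j (F j).
  move=> j hj; have [n [n0 hn]] := hcoef j hj.
  have hSU : S j \subset U j.
    apply/subsetP => A; rewrite !inE => /andP[h1 ->]; rewrite andbT.
    apply: (subset_trans h1); apply: hBsub; rewrite /mm; case: ifP => h //.
    by apply: (hmono j.+1); lia.
  have cU : #|U j| = 'C(m j, j) by rewrite cards_draws card_B // hmM //; lia.
  have cS : #|S j| = 'C(mm j.+1, j).
    rewrite cards_draws card_B // /mm; case: ifP => h //; apply: hmM; lia.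
  have hnU : (n <= #|U j|)%N by rewrite cU -(ler_nat R) -hn hbinhi.
  have hSn : (#|S j| <= n)%N.
    rewrite cS /mm; case: ifP => h.
      rewrite -(ler_nat R) -hn; have := hbinlo j.+1; apply; lia.
    rewrite bin0n; case: (j) hj => //.
  have hc : (#|S j| + (n - #|S j|) <= #|U j|)%N by lia.
  have [G [g1 g2 g3]] := @ext_set _ (n - #|S j|)%N _ _ hSU hc.
  rewrite /F; case: pickP => [G' //|/(_ G)].
  by rewrite /P g1 g2 g3 subnKC // hn eqxx.
have hFsize : forall j A, (1 <= j <= d)%N -> A \in F j -> A \subset B (m j) /\ #|A| = j.
  move=> j A hj hA; have /and3P[_ hFU _] := hPF j hj.
  by have := subsetP hFU A hA; rewrite inE => /andP[-> /eqP].
pose D := [set A : {set 'I_M} | (#|A| == 0%N) || ((#|A| <= d)%N && (A \in F #|A|))].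
exists 'I_M, D; split.
  split; first by rewrite inE cards0 eqxx.
  move=> A C; rewrite !inE => /orP[/eqP hA0| /andP[hAd hAF]] hCA.
    apply/orP; left; apply/eqP; have := subset_leq_card hCA; lia.
  have [hC0|hCpos] := posnP #|C|; first by rewrite hC0.
  have hCA' := subset_leq_card hCA.
  have hA1 : (1 <= #|A| <= d)%N by lia.
  have [hAB _] := hFsize _ _ hA1 hAF.
  case: (eqVneq #|C| #|A|) => e.
    have : C == A by rewrite eqEcard hCA e leqnn.
    by move/eqP ->; rewrite hAd hAF orbT.
  apply/orP; right; rewrite (leq_trans hCA' hAd) /=.
  have hC1 : (1 <= #|C| <= d)%N by lia.
  have /and3P[hSF _ _] := hPF _ hC1.
  apply: (subsetP hSF); rewrite inE eqxx andbT.
  apply: (subset_trans hCA); apply: (subset_trans hAB); apply: hBsub.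
  rewrite /mm; have -> : (#|C|.+1 <= d)%N by lia.
  have h3 : (#|C|.+1 + (#|A| - #|C|.+1) <= d)%N by lia.
  have := hanti (#|A| - #|C|.+1)%N #|C|.+1 isT h3.
  by rewrite subnKC //; lia.
apply/polyP => k; rewrite coef_poly coefD coef1 coef_sum.
under eq_bigr => i _ do rewrite coefZ coefXn.
have [->|k0] := posnP k.
  rewrite big_nat big1 ?addr0 => [|i /andP[hi _]]; last by rewrite eq_sym gtn_eqF // mulr0.
  rewrite ltn0Sn; congr (_%:R).
  rewrite /nfaces (_ : [set A in D | #|A| == 0%N] = [set set0]) ?cards1 //.
  apply/setP => A; rewrite !inE cards_eq0; case: (A =P set0) => [->|_] //.
  by rewrite andbF.
case: (leqP k d) => kd.
  have hk : (1 <= k <= d)%N by lia.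
  rewrite (bigD1_seq k) ?mem_index_iota ?iota_uniq //= ?eqxx ?mulr1.
  rewrite big1 ?addr0 => [|i /negPf]; last by rewrite eq_sym => ->; rewrite mulr0.
  rewrite ?(gtn_eqF k0) ?add0r.
  have [n [n0 hn]] := hcoef k hk.
  have hkm : (k <= m k)%N.
    by rewrite -bin_gt0 (leq_trans n0) // -(ler_nat R) -hn hbinhi.
  rewrite card_ord; have -> : (k < M.+1)%N by rewrite ltnS (leq_trans hkm) // hmM.
  have /and3P[_ _ /eqP <-] := hPF k hk; congr (_%:R).
  rewrite /nfaces; apply: eq_card => A; rewrite !inE.
  case: (boolP (A \in F k)) => hA.
    have [_ ->] := hFsize _ _ hk hA; rewrite eqxx (gtn_eqF k0) kd hA /=.
    by [].
  case: (#|A| =P k) => [->|] //; by rewrite ?(gtn_eqF k0) ?kd ?(negbTE hA) ?andbF.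
rewrite big_nat big1 ?addr0 => [|i /andP[_ hi]]; last first.
  by rewrite gtn_eqF ?mulr0 //; apply: leq_trans hi kd.
rewrite ?(gtn_eqF k0) ?addr0 ?add0r; case: ifP => _ //.
rewrite /nfaces (_ : [set A in D | #|A| == k] = set0) ?cards0 //.
apply/setP => A; rewrite !inE; apply/negbTE; apply/negP.
move=> /andP[/orP[/eqP h|/andP[h _]] /eqP hk]; lia.
Qed.
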